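(* Let $q_1,q_2\in[1,\infty]$ and $\alpha_1,\alpha_2\ge0$ satisfy $1=\frac1{q_1}+\frac1{q_2}$, and set $\alpha=\frac{\alpha_1}{q_1}+\frac{\alpha_2}{q_2}$ (with $1/\infty=0$). Then $$\|f_1f_2\|_{\mathfrak L^{1,\infty}(\log\mathfrak L)^\alpha}\le\|f_1\|_{\mathfrak L^{q_1,\infty}(\log\mathfrak L)^{\alpha_1}}\|f_2\|_{\mathfrak L^{q_2,\infty}(\log\mathfrak L)^{\alpha_2}}$$ for all $f_1\in\mathfrak L^{q_1,\infty}(\log\mathfrak L)^{\alpha_1}$, $f_2\in\mathfrak L^{q_2,\infty}(\log\mathfrak L)^{\alpha_2}$. Furthermore, $$|||\tilde f_1\tilde f_2|||_{1,\alpha;\rho}\le|||\tilde f_1|||_{q_1,\alpha_1;\rho}\,|||\tilde f_2|||_{q_2,\alpha_2;\rho}$$ for all $\tilde f_1\in\mathfrak L^{q_1,\infty}_{\rm ul}(\log\mathfrak L)^{\alpha_1}$, $\tilde f_2\in\mathfrak L^{q_2,\infty}_{\rm ul}(\log\mathfrak L)^{\alpha_2}$ and $\rho>0$.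
   Context: For $q\in[1,\infty)$, $\alpha\ge0$ and $f\in L^1_{\rm loc}(\mathbb R^n)$, $\|f\|_{\mathfrak L^{q,\infty}(\log\mathfrak L)^\alpha}:=\sup_{s>0}\{[\log(e+1/s)]^\alpha\sup_{|E|=s}\int_E|f|^q\,dx\}^{1/q}$ (inner sup over measurable $E$ with $|E|=s$); for $q=\infty$ it is $\|f\|_{L^\infty}$. $\mathfrak L^{q,\infty}(\log\mathfrak L)^\alpha$ is the set of $f\in L^1_{\rm loc}$ with finite norm. For $\rho>0$, $|||f|||_{q,\alpha;\rho}:=\sup_{z\in\mathbb R^n}\|f\chi_{B(z,\rho)}\|_{\mathfrak L^{q,\infty}(\log\mathfrak L)^\alpha}$; $\mathfrak L^{q,\infty}_{\rm ul}(\log\mathfrak L)^\alpha$ is the set of $f\in L^1_{\rm loc}$ with $|||f|||_{q,\alpha;1}<\infty$. *)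

(* Defs.v *)
From HB Require Import structures.
From mathcomp Require Import all_boot all_order all_algebra.
From mathcomp Require Import all_classical all_reals all_analysis.
From mathcomp Require Import ess_sup_inf.

Unset Strict Implicit.
Unset Printing Implicit Defensive.

Import Order.TTheory GRing.Theory Num.Theory.
Import numFieldNormedType.Exports.

Local Open Scope classical_set_scope.
Local Open Scope ring_scope.

(* Lebesgue measure on R^n = 'rV[R]_n, built as the Caratheodory       *)
(* extension of the Lebesgue outer measure                             *)

(* a type copy of R^n where every set is "measurable": only used to feed
   the library's outer-measure construction [mu_ext] (covers by arbitrary
   sets, the premeasure [pre_vol] being +oo on non-boxes). *)
Definition rn_all (R : realType) (n : nat) := 'rV[R]_n.
HB.instance Definition _ (R : realType) (n : nat) :=
  Choice.on (rn_all R n).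
HB.instance Definition _ (R : realType) (n : nat) :=
  isPointed.Build (rn_all R n) (0 : 'rV[R]_n).
HB.instance Definition _ (R : realType) (n : nat) :=
  @isMeasurable.Build default_measure_display (rn_all R n)
    discrete_measurable (@discrete_measurable0 _)
    (@discrete_measurableC _) (@discrete_measurableU _).

Definition box (R : realType) (n : nat) (a b : 'rV[R]_n) : set 'rV[R]_n :=
  [set x | forall i, a ord0 i <= x ord0 i < b ord0 i].

(* elementary volume: volume of A if A is a box, 0 on the empty set,
   +oo otherwise *)
Definition pre_vol (R : realType) (n : nat) (A : set (rn_all R n)) : \bar R :=
  if pselect (A = set0) then 0%E else
  ereal_inf [set ((\prod_(i < n) (ab.2 ord0 i - ab.1 ord0 i))%:E)%E |
             ab in [set ab : 'rV[R]_n * 'rV[R]_n |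
                    (forall i, ab.1 ord0 i <= ab.2 ord0 i) /\
                    A = box R n ab.1 ab.2]].

Lemma pre_vol0 (R : realType) (n : nat) : pre_vol R n set0 = 0%E.
Proof. rewrite /pre_vol; by destruct (pselect (@set0 (rn_all R n) = set0)). Qed.

Lemma pre_vol_ge0 (R : realType) (n : nat) (A : set (rn_all R n)) :
  (0 <= pre_vol R n A)%E.
Proof.
rewrite /pre_vol; destruct (pselect (A = set0)) as [h|h]; first by [].
apply: le_ereal_inf_tmp => _ [ab [Hab _] <-].
rewrite lee_fin; apply: prodr_ge0 => i _; rewrite subr_ge0; exact: Hab.
Qed.

Definition leb_outer (R : realType) (n : nat) : set (rn_all R n) -> \bar R :=
  mu_ext (pre_vol R n).

HB.instance Definition _ (R : realType) (n : nat) :=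
  isOuterMeasure.Build _ _ (leb_outer R n)
    (mu_ext0 (@pre_vol0 R n) (@pre_vol_ge0 R n))
    (mu_ext_ge0 (@pre_vol_ge0 R n))
    (le_mu_ext (pre_vol R n))
    (mu_ext_sigma_subadditive (@pre_vol_ge0 R n)).

Definition leb_om (R : realType) (n : nat) :
  {outer_measure set (rn_all R n) -> \bar R} := leb_outer R n.

Definition Rn (R : realType) (n : nat) := caratheodory_type (leb_om R n).

Definition lebn (R : realType) (n : nat) :
  {measure set (Rn R n) -> \bar R} :=
  (leb_om R n : set (caratheodory_type (leb_om R n)) -> \bar R).

Local Open Scope ereal_scope.

Definition eball (R : realType) (n : nat) (z : 'rV[R]_n) (r : R) : set (Rn R n) :=
  [set x : 'rV[R]_n | (\sum_(i < n) (x ord0 i - z ord0 i) ^+ 2 < r ^+ 2)%R].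

Definition L1loc (R : realType) (n : nat) (f : 'rV[R]_n -> R) : Prop :=
  measurable_fun [set: Rn R n] (f : Rn R n -> R) /\
  forall (z : 'rV[R]_n) (r : R), (0 < r)%R ->
    (lebn R n).-integrable (eball R n z r) (fun x => (f x)%:E).

Definition logw (R : realType) (alpha s : R) : R :=
  (ln (expR 1 + s^-1)) `^ alpha.

Definition LlogL_norm (R : realType) (n : nat) (q : \bar R) (alpha : R)
    (f : 'rV[R]_n -> R) : \bar R :=
  match q with
  | r%:E =>
      ereal_sup [set ((logw R alpha s)%:E *
                      ereal_sup [set \int[lebn R n]_(x in E) ((`|f x| `^ r)%R)%:E
                                | E in [set E : set (Rn R n) |
                                        measurable E /\ lebn R n E = s%:E]])
                     `^ (r^-1)
                | s in [set s : R | (0 < s)%R]]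
  | +oo => ess_sup (lebn R n) (fun x => (`|f x|)%:E)
  | -oo => 0 (* not used: q >= 1 *)
  end.

Definition in_LlogL (R : realType) (n : nat) (q : \bar R) (alpha : R)
    (f : 'rV[R]_n -> R) : Prop :=
  L1loc R n f /\ LlogL_norm R n q alpha f < +oo.

Definition ul_norm (R : realType) (n : nat) (q : \bar R) (alpha rho : R)
    (f : 'rV[R]_n -> R) : \bar R :=
  ereal_sup [set LlogL_norm R n q alpha
                   (fun x => (f x * \1_(eball R n z rho) x)%R)
            | z in [set: 'rV[R]_n]].

Definition in_ul (R : realType) (n : nat) (q : \bar R) (alpha : R)
    (f : 'rV[R]_n -> R) : Prop :=
  L1loc R n f /\ ul_norm R n q alpha 1%R f < +oo.

Definition recip_exp (R : realType) (q : \bar R) : R :=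
  match q with r%:E => r^-1 | _ => 0%R end.

(* Main.v *)
Require Import Defs.
From HB Require Import structures.
From mathcomp Require Import all_boot all_order all_algebra.
From mathcomp Require Import all_classical all_reals all_analysis.
From mathcomp Require Import ess_sup_inf measurable_realfun.
Import Order.TTheory GRing.Theory Num.Theory.
Import numFieldNormedType.Exports.
Local Open Scope classical_set_scope.
Local Open Scope ring_scope.
Local Open Scope ereal_scope.

Section gen.
Import HBNNSimple.
Context d (T : measurableType d) (R : realType) (mu : {measure set T -> \bar R}).

Lemma le_nnint (f g : T -> \bar R) : (forall x, 0 <= f x) ->
  (forall x, f x <= g x) -> \int[mu]_x f x <= \int[mu]_x g x.
Proof.
move=> f0 fg; have g0 x : 0 <= g x by apply: le_trans (fg x).
rewrite !ge0_integralTE//; apply: le_ereal_sup => _ [h hf <-].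
by exists h => // x; apply: le_trans (hf x) (fg x).
Qed.

Lemma kernel (H : T -> \bar R) (B : set T) (M : \bar R) :
  (forall x, 0 <= H x) ->
  (forall K, measurable K -> K `<=` B -> \int[mu]_(x in K) H x <= M) ->
  \int[mu]_x (H \_ B) x <= M.
Proof.
move=> H0 HK; have HB0 x : 0 <= (H \_ B) x by rewrite /patch; case: ifP.
rewrite ge0_integralTE//; apply: ge_ereal_sup => _ [h hle <-].
have mK : measurable (h @^-1` `]0%R, +oo[).
  exact: measurable_sfunP.
have KB : h @^-1` `]0%R, +oo[ `<=` B.
  move=> x /=; rewrite in_itv /= andbT => hx.
  have := hle x; rewrite /patch; case: ifPn => [/set_mem//|_].
  by rewrite lee_fin => /(lt_le_trans hx); rewrite ltxx.
apply: le_trans (HK _ mK KB).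
rewrite -integralT_nnsfun [leRHS]integral_mkcond.
apply: le_nnint => x; first by rewrite lee_fin fun_ge0.
rewrite /patch; case: ifPn => xK.
  have xB : x \in B by apply/mem_set; apply: KB; apply/set_mem.
  by have := hle x; rewrite /patch xB.
rewrite lee_fin leNgt; apply/negP => hx; apply/negP: xK; rewrite negbK.
by apply/mem_set => /=; rewrite in_itv /= hx.
Qed.


Lemma core_fin (u v : T -> R) (B E : set T) (p q : R) :
  measurable_fun setT u -> measurable_fun setT v -> measurable E ->
  (0 < p)%R -> (0 < q)%R -> (p^-1 + q^-1 = 1)%R ->
  \int[mu]_(x in E) ((`|u x * v x * \1_B x| `^ 1)%R)%:E <=
  (\int[mu]_(x in E) ((`|u x * \1_B x| `^ p)%R)%:E) `^ p^-1 *
  (\int[mu]_(x in E) ((`|v x * \1_B x| `^ q)%R)%:E) `^ q^-1.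
Proof.
move=> mu_ mv mE p0 q0 pq.
rewrite integral_mkcond.
have -> : ((fun x => ((`|u x * v x * \1_B x| `^ 1)%R)%:E) \_ E) =
    ((fun x => ((`|u x * v x|)%R)%:E) \_ E) \_ B.
  apply/funext => x; rewrite /patch indicE.
  case: (boolP (x \in E)) => xE; case: (boolP (x \in B)) => xB //=.
  - by rewrite mulr1 powRr1.
  - by rewrite mulr0 normr0 powR0.
apply: kernel => [x|K mK KB]; first by rewrite /patch; case: ifP.
rewrite -integral_mkcondl.
have mK' : measurable (E `&` K) by exact: measurableI.
set K' := E `&` K.
pose f := fun x => (u x * \1_K' x)%R.
pose g := fun x => (v x * \1_K' x)%R.
have mf : measurable_fun setT f.
  by apply: measurable_funM => //; apply: measurable_indic.
have mg : measurable_fun setT g.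
  by apply: measurable_funM => //; apply: measurable_indic.
have -> : \int[mu]_(x in K') ((`|u x * v x|)%R)%:E = Lnorm mu 1 (EFin \o (f \* g)%R).
  rewrite Lnorm1 integral_mkcond; apply: eq_integral => x _.
  rewrite /patch /f /g /= indicE; case: ifPn => xK /=.
    by rewrite !mulr1.
  by rewrite !mulr0 normr0.
apply: le_trans (hoelder mu mf mg p0 q0 pq) _.
apply: lee_pmul; [exact: Lnorm_ge0|exact: Lnorm_ge0| |].
- rewrite unlock /=.
  apply: gt0_ler_poweR.
  + by rewrite invr_ge0 ltW.
  + by rewrite in_itv /= leey andbT integral_ge0 // => x _; rewrite poweR_ge0.
  + by rewrite in_itv /= leey andbT integral_ge0 // => x _; rewrite lee_fin powR_ge0.
  rewrite [leRHS]integral_mkcond; apply: le_nnint => x; first by rewrite lee_fin powR_ge0.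
  rewrite /patch /f indicE.
  case: (boolP (x \in K')) => xK /=.
    have [xE0 xK0] : E x /\ K x by apply/set_mem.
    have xE : x \in E by apply/mem_set.
    have xB : x \in B by apply/mem_set; apply: KB.
    by rewrite xE indicE xB.
  rewrite mulr0 normr0 powR0 ?gt_eqF//; case: ifP => _ //.
  by rewrite lee_fin powR_ge0.
- rewrite unlock /=.
  apply: gt0_ler_poweR.
  + by rewrite invr_ge0 ltW.
  + by rewrite in_itv /= leey andbT integral_ge0 // => x _; rewrite poweR_ge0.
  + by rewrite in_itv /= leey andbT integral_ge0 // => x _; rewrite lee_fin powR_ge0.
  rewrite [leRHS]integral_mkcond; apply: le_nnint => x; first by rewrite lee_fin powR_ge0.
  rewrite /patch /g indicE.
  case: (boolP (x \in K')) => xK /=.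
    have [xE0 xK0] : E x /\ K x by apply/set_mem.
    have xE : x \in E by apply/mem_set.
    have xB : x \in B by apply/mem_set; apply: KB.
    by rewrite xE indicE xB.
  rewrite mulr0 normr0 powR0 ?gt_eqF//; case: ifP => _ //.
  by rewrite lee_fin powR_ge0.
Qed.


Lemma core_inf (u v : T -> R) (B E : set T) :
  measurable_fun setT u -> measurable_fun setT v -> measurable E ->
  0 <= ess_sup mu (fun x => ((`|u x * \1_B x|)%R)%:E) ->
  \int[mu]_(x in E) ((`|u x * v x * \1_B x| `^ 1)%R)%:E <=
  ess_sup mu (fun x => ((`|u x * \1_B x|)%R)%:E) *
  \int[mu]_(x in E) ((`|v x * \1_B x| `^ 1)%R)%:E.
Proof.
move=> mu_ mv mE M0.
have hae0 := ess_sup_ge mu (fun x => ((`|u x * \1_B x|)%R)%:E).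
set J := \int[mu]_(x in E) ((`|v x * \1_B x| `^ 1)%R)%:E.
have J0 : 0 <= J by apply: integral_ge0 => x _; rewrite lee_fin powR_ge0.
rewrite integral_mkcond.
have -> : ((fun x => ((`|u x * v x * \1_B x| `^ 1)%R)%:E) \_ E) =
    ((fun x => ((`|u x * v x|)%R)%:E) \_ E) \_ B.
  apply/funext => x; rewrite /patch indicE.
  case: (boolP (x \in E)) => xE; case: (boolP (x \in B)) => xB //=.
  - by rewrite mulr1 powRr1.
  - by rewrite mulr0 normr0 powR0.
apply: kernel => [x|K mK KB]; first by rewrite /patch; case: ifP.
rewrite -integral_mkcondl.
have mK' : measurable (E `&` K) by exact: measurableI.
set K' := E `&` K.
have hJ : \int[mu]_(x in K') ((`|v x|)%R)%:E <= J.
  rewrite integral_mkcond /J [leRHS]integral_mkcond; apply: le_nnint => x.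
    by rewrite /patch; case: ifP.
  rewrite /patch indicE.
  case: (boolP (x \in K')) => xK /=.
    have [xE0 xK0] : E x /\ K x by apply/set_mem.
    have xE : x \in E by apply/mem_set.
    have xB : x \in B by apply/mem_set; apply: KB.
    by rewrite xE xB mulr1 powRr1.
  by case: ifP => _ //; rewrite lee_fin powR_ge0.
have muv : measurable_fun K' (fun x => ((`|u x * v x|)%R)%:E).
  apply/measurable_EFinP; apply: measurableT_comp => //.
  by apply: measurable_funTS; apply: measurable_funM.
have mv' : measurable_fun K' (fun x => ((`|v x|)%R)%:E).
  apply/measurable_EFinP; apply: measurableT_comp => //.
  exact: measurable_funTS.
move: M0 hae0.
case: (ess_sup mu (fun x => ((`|u x * \1_B x|)%R)%:E)) => [m| |] M0 hae0 //.
-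
  have hae : \forall x \ae mu, K' x -> ((`|u x|)%R)%:E <= m%:E.
    apply: filterS hae0 => x hx [xE0 xK0].
    have xB : x \in B by apply/mem_set; apply: KB.
    by move: hx; rewrite indicE xB mulr1.
  apply: (@le_trans _ _ (\int[mu]_(x in K') (m%:E * ((`|v x|)%R)%:E))).
    apply: ae_ge0_le_integral => //.
    + by move=> x _; rewrite mule_ge0.
    + by apply: emeasurable_funM => //; apply: measurable_cst.
    apply: filterS hae => x h xK; move: (h xK).
    by rewrite -EFinM !lee_fin normrM => hu; rewrite ler_wpM2r.
  rewrite ge0_integralZl_EFin //.
  by apply: lee_wpmul2l.
-
  move: J0; rewrite le_eqVlt => /orP[/eqP J0|Jpos]; last first.
    by rewrite gt0_mulye ?leey.
  rewrite -J0 mule0.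
  have I0 : \int[mu]_(x in K') `|(v x)%:E| = 0.
    apply/eqP; rewrite eq_le; apply/andP; split.
      by rewrite J0; exact: hJ.
    by apply: integral_ge0.
  have mvE : measurable_fun K' (EFin \o v).
    by apply/measurable_EFinP; exact: measurable_funTS.
  have hae := (ae_eq_integral_abs mu mK' mvE).1 I0.
  rewrite -(integral0 mu K').
  apply: ae_ge0_le_integral => //.
  apply: filterS hae => x h xK.
  by move: (h xK) => /= [->]; rewrite mulr0 normr0.
Qed.


Definition lln (q : \bar R) (alpha : R) (f : T -> R) : \bar R :=
  match q with
  | r%:E =>
      ereal_sup [set ((logw R alpha s)%:E *
                      ereal_sup [set \int[mu]_(x in E) ((`|f x| `^ r)%R)%:E
                                | E in [set E : set T |
                                        measurable E /\ mu E = s%:E]])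
                     `^ (r^-1)
                | s in [set s : R | (0 < s)%R]]
  | +oo => ess_sup mu (fun x => (`|f x|)%:E)
  | -oo => 0
  end.

Lemma logw_gt0 a s : (0 < s)%R -> (0 < logw R a s)%R.
Proof.
move=> s0; rewrite /logw; apply: powR_gt0; apply: ln_gt0.
have : (1 < expR (1 : R))%R by rewrite expR_gt1.
by move=> h; apply: lt_le_trans h _; rewrite lerDl invr_ge0 ltW.
Qed.

Lemma logw_split a1 a2 r1 r2 s : (0 < s)%R ->
  logw R (a1 * r1^-1 + a2 * r2^-1) s =
  (logw R a1 s `^ r1^-1 * logw R a2 s `^ r2^-1)%R.
Proof.
move=> s0; rewrite /logw -!powRrM powRD //.
have : (0 < logw R 0 s)%R by exact: logw_gt0.
rewrite /logw powRr0 => _.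
apply/implyP => _; rewrite gt_eqF // ln_gt0 //.
have : (1 < expR (1 : R))%R by rewrite expR_gt1.
by move=> h; apply: lt_le_trans h _; rewrite lerDl invr_ge0 ltW.
Qed.

Lemma pow1_sup (w : R) (A : set (\bar R)) y : (0 < w)%R ->
  (forall a, A a -> 0 <= a) -> 0 <= y ->
  (forall a, A a -> w%:E * a <= y) -> (w%:E * ereal_sup A) `^ 1 <= y.
Proof.
move=> w0 A0 y0 Ay.
have [->|/set0P[a Aa]] := eqVneq A set0.
  by rewrite ereal_sup0 gt0_muleNy ?lte_fin // poweRNyr ?oner_neq0.
rewrite poweRe1; last first.
  apply: mule_ge0; first by rewrite lee_fin ltW.
  exact: le_trans (A0 a Aa) (ereal_sup_ubound Aa).
rewrite -ereal_sup_pZl //; apply: ge_ereal_sup => _ [b Ab <-]; exact: Ay.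
Qed.

Lemma lln_fin_ge0 r a f : 0 <= lln r%:E a f.
Proof.
rewrite /lln; apply: le_ereal_sup_tmp.
by eexists; [exists 1%R; [exact: ltr01|reflexivity]| exact: poweR_ge0].
Qed.


Lemma lln_deg r a f : mu setT = 0 -> r != 0%R -> lln r%:E a f = 0.
Proof.
move=> mu0 r0; apply/eqP; rewrite eq_le lln_fin_ge0 andbT.
rewrite /lln; apply: ge_ereal_sup => _ [s s0 <-].
rewrite /= in s0.
have -> : [set \int[mu]_(x in E) ((`|f x| `^ r)%R)%:E | E in [set E : set T | measurable E /\ mu E = s%:E]] = set0.
  apply/seteqP; split => // y [E [mE muE] _].
  have : mu E <= mu setT by apply: le_measure => //; rewrite inE.
  by rewrite mu0 muE lee_fin leNgt s0.
by rewrite ereal_sup0 gt0_muleNy ?lte_fin ?logw_gt0 // poweRNyr // invr_neq0.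
Qed.

Lemma in_0y (x : \bar R) : 0 <= x -> x \in `[0, +oo].
Proof. by move=> x0; rewrite in_itv /= leey andbT. Qed.

Lemma lln_fin (u v : T -> R) B r1 r2 a1 a2 :
  measurable_fun setT u -> measurable_fun setT v ->
  (0 < r1)%R -> (0 < r2)%R -> (r1^-1 + r2^-1 = 1)%R ->
  lln 1 (a1 * r1^-1 + a2 * r2^-1) (fun x => u x * v x * \1_B x)%R <=
  lln r1%:E a1 (fun x => u x * \1_B x)%R *
  lln r2%:E a2 (fun x => v x * \1_B x)%R.
Proof.
move=> mu_ mv r10 r20 rr.
rewrite {1}/lln invr1; apply: ge_ereal_sup => _ [s s0 <-].
rewrite /= in s0.
set S1 := ereal_sup [set \int[mu]_(x in E) ((`|u x * \1_B x| `^ r1)%R)%:E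
   | E in [set E : set T | measurable E /\ mu E = s%:E]].
set S2 := ereal_sup [set \int[mu]_(x in E) ((`|v x * \1_B x| `^ r2)%R)%:E
   | E in [set E : set T | measurable E /\ mu E = s%:E]].
apply: (@le_trans _ _ (((logw R a1 s)%:E * S1) `^ r1^-1 *
                       ((logw R a2 s)%:E * S2) `^ r2^-1)); last first.
  apply: lee_pmul; try exact: poweR_ge0.
  - by rewrite /lln; apply: ereal_sup_ubound; exists s.
  - by rewrite /lln; apply: ereal_sup_ubound; exists s.
apply: pow1_sup.
- exact: logw_gt0.
- by move=> _ [E _ <-]; apply: integral_ge0 => x _; rewrite lee_fin powR_ge0.
- by rewrite mule_ge0 // poweR_ge0.
move=> _ [E [mE muE] <-].
have I1le : \int[mu]_(x in E) ((`|u x * \1_B x| `^ r1)%R)%:E <= S1.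
  by apply: ereal_sup_ubound; exists E.
have I2le : \int[mu]_(x in E) ((`|v x * \1_B x| `^ r2)%R)%:E <= S2.
  by apply: ereal_sup_ubound; exists E.
have I10 : 0 <= \int[mu]_(x in E) ((`|u x * \1_B x| `^ r1)%R)%:E.
  by apply: integral_ge0 => x _; rewrite lee_fin powR_ge0.
have I20 : 0 <= \int[mu]_(x in E) ((`|v x * \1_B x| `^ r2)%R)%:E.
  by apply: integral_ge0 => x _; rewrite lee_fin powR_ge0.
have w10 := @logw_gt0 a1 s s0.
have w20 := @logw_gt0 a2 s s0.
rewrite logw_split // EFinM.
apply: le_trans (lee_wpmul2l _ (core_fin u v B E r1 r2 mu_ mv mE r10 r20 rr)) _.
  by rewrite mule_ge0 // lee_fin powR_ge0.
rewrite muleACA -[(logw R a1 s `^ r1^-1)%:E]poweR_EFin -[(logw R a2 s `^ r2^-1)%:E]poweR_EFin.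
rewrite -poweRM; [|by rewrite lee_fin ltW|exact: I10].
rewrite -poweRM; [|by rewrite lee_fin ltW|exact: I20].

apply: lee_pmul.
- exact: poweR_ge0.
- exact: poweR_ge0.
- apply: gt0_ler_poweR; first by rewrite invr_ge0 ltW.
  + apply: in_0y; apply: mule_ge0 => //; by rewrite lee_fin ltW.
  + apply: in_0y; apply: mule_ge0; first by rewrite lee_fin ltW.
    exact: le_trans I10 I1le.
  + by apply: lee_wpmul2l; [rewrite lee_fin ltW|exact: I1le].
- apply: gt0_ler_poweR; first by rewrite invr_ge0 ltW.
  + apply: in_0y; apply: mule_ge0 => //; by rewrite lee_fin ltW.
  + apply: in_0y; apply: mule_ge0; first by rewrite lee_fin ltW.
    exact: le_trans I20 I2le.
  + by apply: lee_wpmul2l; [rewrite lee_fin ltW|exact: I2le].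
Qed.


Arguments lln : simpl never.

Lemma lln_inf (u v : T -> R) B a1 a2 :
  measurable_fun setT u -> measurable_fun setT v ->
  lln 1 a2 (fun x => u x * v x * \1_B x)%R <=
  lln +oo a1 (fun x => u x * \1_B x)%R *
  lln 1 a2 (fun x => v x * \1_B x)%R.
Proof.
move=> mu_ mv.
have [mu0|mupos] : mu setT = 0 \/ 0 < mu setT.
  by have := measure_ge0 mu setT; rewrite le_eqVlt => /orP[/eqP<-|]; [left|right].
  by rewrite !lln_deg ?oner_neq0 // mule0.
have M0 : 0 <= ess_sup mu (fun x => ((`|u x * \1_B x|)%R)%:E).
  by apply: ess_sup_gee => //; apply: nearW => x; rewrite lee_fin normr_ge0.
rewrite [X in _ <= X * _]/lln.
rewrite {1}/lln invr1; apply: ge_ereal_sup => _ [s s0 <-].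
rewrite /= in s0.
set S2 := ereal_sup [set \int[mu]_(x in E) ((`|v x * \1_B x| `^ 1)%R)%:E
   | E in [set E : set T | measurable E /\ mu E = s%:E]].
have w0 := @logw_gt0 a2 s s0.
apply: (@le_trans _ _ (ess_sup mu (fun x => ((`|u x * \1_B x|)%R)%:E) *
           ((logw R a2 s)%:E * S2) `^ 1^-1)); last first.
  apply: lee_wpmul2l => //; rewrite /lln; apply: ereal_sup_ubound; by exists s.
apply: pow1_sup => //.
- by move=> _ [E _ <-]; apply: integral_ge0 => x _; rewrite lee_fin powR_ge0.
- by apply: mule_ge0 => //; exact: poweR_ge0.
move=> _ [E [mE muE] <-].
have I2le : \int[mu]_(x in E) ((`|v x * \1_B x| `^ 1)%R)%:E <= S2.
  by apply: ereal_sup_ubound; exists E.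
have I20 : 0 <= \int[mu]_(x in E) ((`|v x * \1_B x| `^ 1)%R)%:E.
  by apply: integral_ge0 => x _; rewrite lee_fin powR_ge0.
rewrite invr1 poweRe1; last first.
  by apply: mule_ge0; [rewrite lee_fin ltW|exact: le_trans I20 I2le].
apply: le_trans (lee_wpmul2l _ (core_inf u v B E mu_ mv mE M0)) _.
  by rewrite lee_fin ltW.
rewrite muleCA.
apply: lee_wpmul2l => //; apply: lee_wpmul2l; [by rewrite lee_fin ltW|exact: I2le].
Qed.


Lemma lln_main (u v : T -> R) B q1 q2 a1 a2 :
  measurable_fun setT u -> measurable_fun setT v ->
  1 <= q1 -> 1 <= q2 -> (recip_exp R q1 + recip_exp R q2 = 1)%R ->
  lln 1 (a1 * recip_exp R q1 + a2 * recip_exp R q2) (fun x => u x * v x * \1_B x)%R <=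
  lln q1 a1 (fun x => u x * \1_B x)%R * lln q2 a2 (fun x => v x * \1_B x)%R.
Proof.
move=> mu_ mv.
case: q1 => [r1| |]; case: q2 => [r2| |] //= h1 h2 hr.
- rewrite !lee_fin in h1 h2.
  by apply: lln_fin => //; [exact: lt_le_trans h1|exact: lt_le_trans h2].
- rewrite addr0 in hr.
  have r11 : r1 = 1%R by apply/eqP; rewrite -invr_eq1 hr.
  subst r1.
  rewrite mulr0 addr0 invr1 mulr1 muleC.
  have -> : (fun x => u x * v x * \1_B x)%R = (fun x => v x * u x * \1_B x)%R.
    by apply/funext => x; rewrite (mulrC (u x)).
  exact: lln_inf.
- rewrite add0r in hr.
  have r21 : r2 = 1%R by apply/eqP; rewrite -invr_eq1 hr.
  subst r2.
  rewrite mulr0 add0r invr1 mulr1.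
  exact: lln_inf.
- by move: hr; rewrite addr0 => /eqP; rewrite eq_sym oner_eq0.
Qed.

Lemma lln_ge0 q a f : 0 < mu setT -> 0 <= lln q a f.
Proof.
move=> mupos; case: q => [r| |] //.
  exact: lln_fin_ge0.
by apply: ess_sup_gee => //; apply: nearW => x; rewrite lee_fin normr_ge0.
Qed.

End gen.

Lemma LlogL_lln (R : realType) (n : nat) q a (f : 'rV[R]_n -> R) :
  LlogL_norm R n q a f = @lln _ _ _ (lebn R n) q a f.
Proof. by []. Qed.

Lemma ul0 (R : realType) (n : nat) r a rho (f : 'rV[R]_n -> R) :
  lebn R n setT = 0 -> r != 0%R -> ul_norm R n r%:E a rho f = 0.
Proof.
move=> mu0 r0; apply/eqP; rewrite eq_le; apply/andP; split.
  apply: ge_ereal_sup => _ [z _ <-].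
  by rewrite LlogL_lln lln_deg.
apply: le_ereal_sup_tmp; eexists.
  by exists (0%R : 'rV[R]_n); [|reflexivity].
by rewrite LlogL_lln lln_fin_ge0.
Qed.

Theorem lemma2p2 (R : realType) (n : nat) (q1 q2 : \bar R) (alpha1 alpha2 : R) :
  1 <= q1 -> 1 <= q2 -> (0 <= alpha1)%R -> (0 <= alpha2)%R ->
  (recip_exp R q1 + recip_exp R q2 = 1)%R ->
  let alpha := (alpha1 * recip_exp R q1 + alpha2 * recip_exp R q2)%R in
  (forall f1 f2 : 'rV[R]_n -> R,
      in_LlogL R n q1 alpha1 f1 -> in_LlogL R n q2 alpha2 f2 ->
      LlogL_norm R n 1 alpha (fun x => f1 x * f2 x)%R
        <= LlogL_norm R n q1 alpha1 f1 * LlogL_norm R n q2 alpha2 f2) /\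
  (forall (g1 g2 : 'rV[R]_n -> R) (rho : R),
      in_ul R n q1 alpha1 g1 -> in_ul R n q2 alpha2 g2 -> (0 < rho)%R ->
      ul_norm R n 1 alpha rho (fun x => g1 x * g2 x)%R
        <= ul_norm R n q1 alpha1 rho g1 * ul_norm R n q2 alpha2 rho g2).
Proof.
move=> hq1 hq2 _ _ hrec alpha; split.
  move=> f1 f2 [[m1 _] _] [[m2 _] _].
  have H := @lln_main _ _ _ (lebn R n) f1 f2 [set: Rn R n] q1 q2 alpha1 alpha2
    m1 m2 hq1 hq2 hrec.
  have e (g : Rn R n -> R) : (fun x => g x * \1_[set: Rn R n] x)%R = g.
    by apply/funext => x; rewrite indicT mulr1.
  have e2 : (fun x => f1 x * f2 x * \1_[set: Rn R n] x)%R =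
            (fun x => f1 x * f2 x)%R.
    by apply/funext => x; rewrite indicT mulr1.
  rewrite e2 (e f1) (e f2) in H.
  exact: H.
move=> g1 g2 rho [[m1 _] _] [[m2 _] _] rho0.
have [mu0|mupos] : lebn R n setT = 0 \/ 0 < lebn R n setT.
  by have := measure_ge0 (lebn R n) setT; rewrite le_eqVlt => /orP[/eqP<-|]; [left|right].
  apply: (@le_trans _ _ 0).
    apply: ge_ereal_sup => _ [z _ <-].
    by rewrite LlogL_lln lln_deg ?oner_neq0.
  clear alpha; move: hq1 hq2 hrec; case: q1 => [r1| |]; case: q2 => [r2| |] //= hq1 hq2 hrec.
  - rewrite ul0 ?mul0e //; rewrite lee_fin in hq1.
    by rewrite gt_eqF // (lt_le_trans ltr01).
  - rewrite ul0 ?mul0e //; rewrite lee_fin in hq1.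
    by rewrite gt_eqF // (lt_le_trans ltr01).
  - rewrite [X in _ <= _ * X]ul0 ?mule0 //; rewrite lee_fin in hq2.
    by rewrite gt_eqF // (lt_le_trans ltr01).
  - by move: hrec; rewrite addr0 => /eqP; rewrite eq_sym oner_eq0.
rewrite /ul_norm; apply: ge_ereal_sup => _ [z _ <-].
apply: le_trans (@lln_main _ _ _ (lebn R n) g1 g2 (eball R n z rho) q1 q2
   alpha1 alpha2 m1 m2 hq1 hq2 hrec) _.
apply: lee_pmul; [exact: lln_ge0|exact: lln_ge0| |].
  by apply: ereal_sup_ubound; exists z.
by apply: ereal_sup_ubound; exists z.
Qed.
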